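(* Let $d\ge 2$ and $\ell\ge 2$. The subKautz digraph $sK(d,\ell)$ has the same girth as the cyclic Kautz digraph $CK(d,\ell+1)$; in particular its girth is at least the smallest positive integer $k$ such that $\ell+1\not\equiv 1\pmod k$ (equivalently, $k\nmid \ell$).
   Context: SubKautz digraph $sK(d,\ell)$: vertices $x_1\ldots x_\ell\in\mathbb Z_{d+1}^\ell$ with $x_i\neq x_{i+1}$; arcs $x_1\ldots x_\ell\to x_2\ldots x_\ell x_{\ell+1}$ for $x_{\ell+1}\neq x_1,x_\ell$. Cyclic Kautz digraph $CK(d,m)$: vertices $x_1\ldots x_m\in\mathbb Z_{d+1}^m$ with $x_i\neq x_{i+1}$ ($1\le i\le m-1$) and $x_m\neq x_1$; arcs $x_1\ldots x_m\to x_2\ldots x_m y$ for $y\neq x_2,x_m$. The girth is the length of a shortest directed cycle. *)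

(* Defs.v *)
From mathcomp Require Import all_boot.
Set Implicit Arguments. Unset Strict Implicit. Unset Printing Implicit Defensive.

(* Symbols are elements of Z_{d+1}, represented as 'I_(d.+1); words are
   sequences of symbols. Only equality of symbols matters. *)
Definition sym (d : nat) := 'I_d.+1.

Definition sK_vertex (d l : nat) (x : seq (sym d)) : bool :=
  (size x == l) &&
  all (fun i => nth ord0 x i != nth ord0 x i.+1) (iota 0 l.-1).
Arguments sK_vertex : clear implicits.

Definition sK_arc (d l : nat) (x y : seq (sym d)) : bool :=
  [exists z : sym d,
     [&& z != nth ord0 x 0, z != nth ord0 x l.-1 & y == rcons (behead x) z]].
Arguments sK_arc : clear implicits.

Definition CK_vertex (d m : nat) (x : seq (sym d)) : bool :=
  sK_vertex d m x && (nth ord0 x m.-1 != nth ord0 x 0).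
Arguments CK_vertex : clear implicits.

Definition CK_arc (d m : nat) (x y : seq (sym d)) : bool :=
  [exists z : sym d,
     [&& z != nth ord0 x 1, z != nth ord0 x m.-1 & y == rcons (behead x) z]].
Arguments CK_arc : clear implicits.

Definition is_dcycle (T : eqType) (V : pred T) (E : rel T) (p : seq T) : bool :=
  [&& 0 < size p, all V p, uniq p & cycle E p].

Definition is_girth (T : eqType) (V : pred T) (E : rel T) (g : nat) : Prop :=
  (exists2 p, is_dcycle V E p & size p = g) /\
  (forall p, is_dcycle V E p -> g <= size p).

Lemma exists_nondiv (n : nat) : exists k, (0 < k) && ~~ (k %| n.+1).
Proof. exists n.+2; rewrite /= gtnNdvd //. Qed.

(* For l >= 1: the smallest positive integer k with ~~ (k %| l),
   equivalently l+1 <> 1 (mod k). *)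
Definition min_nondiv (l : nat) : nat := ex_minn (exists_nondiv l.-1).

(* Main.v *)
Require Import Defs.
From mathcomp Require Import all_boot zify.
From Stdlib Require Import Classical.
Set Implicit Arguments. Unset Strict Implicit. Unset Printing Implicit Defensive.

Lemma cyc_nth (T : Type) (x0 x : T) s i : i < size (x :: s) ->
  nth x0 (x :: rcons s x) i = nth x0 (x :: s) i /\
  nth x0 (rcons s x) i = nth x0 (x :: s) (i.+1 %% size (x :: s)).
Proof.
move=> Hi; split.
  by case: i Hi => [|i] //= Hi; rewrite nth_rcons ltnS in Hi *; rewrite Hi.
rewrite nth_rcons /=; case: ltnP => H1.
  by rewrite modn_small //=.
have -> : i = size s by move: Hi => /=; lia.
by rewrite eqxx modnn.
Qed.

Lemma cycleP (T : Type) (e : rel T) x0 p : 0 < size p ->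
  reflect (forall i, i < size p -> e (nth x0 p i) (nth x0 p (i.+1 %% size p)))
          (cycle e p).
Proof.
case: p => // x s _; rewrite /cycle.
apply: (iffP (@pathP _ e x (rcons s x) x0)) => H i; rewrite ?size_rcons => Hi;
  have [E1 E2] := @cyc_nth _ x0 x s i Hi.
  by move: (H i); rewrite size_rcons E1 E2; apply.
by rewrite E1 E2; apply: H.
Qed.

Definition cw (T : eqType) (V : pred T) (E : rel T) (p : seq T) : bool :=
  [&& 0 < size p, all V p & cycle E p].

Lemma cwP (T : eqType) (V : pred T) (E : rel T) x0 p :
  cw V E p <-> 0 < size p /\ (forall i, i < size p -> V (nth x0 p i)) /\
     (forall i, i < size p -> E (nth x0 p i) (nth x0 p (i.+1 %% size p))).
Proof.
split.
  case/and3P => H0 /(all_nthP x0) HV /(cycleP E x0 H0) HE; by [].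
case=> H0 [HV HE]; apply/and3P; split => //.
  by apply/(all_nthP x0).
by apply/(cycleP E x0 H0).
Qed.

Lemma dcycle_cw (T : eqType) (V : pred T) (E : rel T) p :
  is_dcycle V E p -> cw V E p.
Proof. by case/and4P => *; apply/and3P. Qed.

Lemma nonuniq_split (T : eqType) (p : seq T) : ~~ uniq p ->
  exists p1 x p2, p = p1 ++ x :: p2 /\ x \in p2.
Proof.
elim: p => // y s IH /=; rewrite negb_and negbK; case/orP => H.
  by exists [::], y, s.
have [p1 [x [p2 [-> Hx]]]] := IH H.
by exists (y :: p1), x, p2.
Qed.

Lemma shorten (T : eqType) (V : pred T) (E : rel T) p :
  cw V E p -> exists2 q, is_dcycle V E q & size q <= size p.
Proof.
move: {2}(size p) (leqnn (size p)) => n; elim: n p => [|n IH] p Hs Hp.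
  by case/and3P: Hp; rewrite leqn0 in Hs; rewrite (eqP Hs).
case Hu: (uniq p).
  exists p => //; case/and3P: Hp => *; exact/and4P.
have [p1 [x [p2 [Ep Hx]]]] := nonuniq_split (negbT Hu).
have Hr : rot (size p1) p = x :: p2 ++ p1 by rewrite Ep rot_size_cat.
have Hx' : x \in p2 ++ p1 by rewrite mem_cat Hx.
case/and3P: Hp => _ HV HC.
have HC' : cycle E (x :: p2 ++ p1) by rewrite -Hr rot_cycle.
have HV' : all V (x :: p2 ++ p1) by apply/allP => y; rewrite -Hr mem_rot => /(allP HV).
have Hsz : size (x :: p2 ++ p1) = size p by rewrite -Hr size_rot.
case/splitPr: Hx' HC' HV' Hsz => s1 s2 HC' HV' Hsz.
have Hq : cw V E (x :: s1).
  apply/and3P; split => //.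
    by move: HV'; rewrite /= all_cat /= => /andP[-> /andP[-> _]].
  move: HC'; rewrite /cycle /= rcons_cat /= cat_path /= => /andP[H1 /andP[H2 _]].
  by rewrite rcons_path H1 H2.
have Hsq : size (x :: s1) <= n by move: Hsz Hs; rewrite /= size_cat /=; lia.
have [q Hq1 Hq2] := IH _ Hsq Hq.
exists q => //; apply: leq_trans Hq2 _; move: Hsz; rewrite /= size_cat /=; lia.
Qed.

Lemma min_ex (P : nat -> Prop) : (exists n, P n) ->
  exists n, P n /\ forall m, P m -> n <= m.
Proof.
case=> n Hn; elim: n {-2}n (leqnn n) Hn => [|N IH] n Hle Hn.
  exists n; split => // m _; by rewrite leqn0 in Hle; rewrite (eqP Hle).
case: (classic (exists m, m < n /\ P m)) => [[m [Hm HPm]]|H].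
  apply: (IH m) => //; lia.
exists n; split => // m Hm; rewrite leqNgt; apply/negP => Hlt; apply: H; by exists m.
Qed.

Lemma girth_min (T : eqType) (V : pred T) (E : rel T) g :
  (exists p, cw V E p /\ size p = g) ->
  (forall p, cw V E p -> g <= size p) -> is_girth V E g.
Proof.
case=> p [Hp Hs] Hmin; split.
  have [q Hq Hsq] := shorten Hp.
  exists q => //; apply/eqP; rewrite eqn_leq -{1}Hs Hsq Hmin //; exact: dcycle_cw.
by move=> q Hq; apply: Hmin; apply: dcycle_cw.
Qed.

Section S.
Variables (d l : nat).
Hypothesis hd : 2 <= d.
Hypothesis hl : 2 <= l.
Local Notation nth0 := (nth (@ord0 d)).

Lemma sKvP m x : sK_vertex d m x <->
  size x = m /\ forall i, i.+1 < m -> nth0 x i != nth0 x i.+1.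
Proof.
split.
  case/andP => /eqP Hs /allP H; split => // i Hi; apply: H; rewrite mem_iota; lia.
case=> Hs H; apply/andP; split; first by apply/eqP.
apply/allP => i; rewrite mem_iota => Hi; apply: H; lia.
Qed.

Lemma sKaP m x y : sK_arc d m x y <->
  exists z, [/\ z != nth0 x 0, z != nth0 x m.-1 & y = rcons (behead x) z].
Proof.
split; first by case/existsP => z /and3P[H1 H2 /eqP H3]; exists z.
by case=> z [H1 H2 H3]; apply/existsP; exists z; rewrite H1 H2 H3 eqxx.
Qed.

Lemma CKaP m x y : CK_arc d m x y <->
  exists z, [/\ z != nth0 x 1, z != nth0 x m.-1 & y = rcons (behead x) z].
Proof.
split; first by case/existsP => z /and3P[H1 H2 /eqP H3]; exists z.
by case=> z [H1 H2 H3]; apply/existsP; exists z; rewrite H1 H2 H3 eqxx.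
Qed.

Lemma arc_nth x y z : size x = l -> y = rcons (behead x) z ->
  (forall j, j.+1 < l -> nth0 y j = nth0 x j.+1) /\ nth0 y l.-1 = z.
Proof.
move=> Hx ->; split.
  by move=> j Hj; rewrite nth_rcons size_behead Hx nth_behead ifT //; lia.
by rewrite nth_rcons size_behead Hx ltnn eqxx.
Qed.

Lemma consl (a : 'I_d.+1) s : nth0 (a :: s) l = nth0 s l.-1.
Proof. by case: l hl. Qed.

Lemma L1 x y : sK_vertex d l x -> sK_vertex d l y -> sK_arc d l x y ->
  CK_vertex d l.+1 (nth0 x 0 :: y).
Proof.
move=> /sKvP[Hx Vx] /sKvP[Hy Vy] /sKaP[z [Z1 Z2 Ey]].
have [Y1 Y2] := arc_nth Hx Ey.
apply/andP; split.
  apply/sKvP; split; first by rewrite /= Hy.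
  case=> [|i] Hi /=.
    rewrite Y1; last by lia.
    by apply: Vx; lia.
  by apply: Vy; lia.
by rewrite /= consl Y2.
Qed.

Lemma L2 x y t : sK_vertex d l x -> sK_vertex d l y -> sK_arc d l x y ->
  sK_arc d l y t -> CK_arc d l.+1 (nth0 x 0 :: y) (nth0 y 0 :: t).
Proof.
move=> _ /sKvP[Hy _] _ /sKaP[z [Z1 Z2 Et]]; apply/CKaP; exists z; split => //.
  by rewrite /= consl.
case: y Hy Et Z1 Z2 => [|y0 ys] /= Hy -> //; lia.
Qed.

Lemma L3 x : CK_vertex d l.+1 x -> sK_vertex d l (behead x).
Proof.
case/andP => /sKvP[Hs V] _; apply/sKvP; split; first by rewrite size_behead Hs.
by move=> i Hi; rewrite !nth_behead; apply: V.
Qed.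

Lemma L4 x y : CK_vertex d l.+1 x -> CK_arc d l.+1 x y ->
  sK_arc d l (behead x) (behead y).
Proof.
case/andP => /sKvP[Hs _] _ /CKaP[z [Z1 Z2 Ey]]; apply/sKaP; exists z; split.
- by rewrite nth_behead.
- by rewrite nth_behead prednK //; lia.
move: Hs Ey; clear Z1 Z2; case: x => [|a [|b r]] /= Hs; try lia.
by move=> ->.
Qed.

Definition sKV := sK_vertex d l.
Definition sKE := sK_arc d l.
Definition CKV := CK_vertex d l.+1.
Definition CKE := CK_arc d l.+1.

Lemma T1 p : cw sKV sKE p -> cw CKV CKE
  (mkseq (fun i => nth0 (nth [::] p i) 0 :: nth [::] p (i.+1 %% size p)) (size p)).
Proof.
move/(@cwP _ _ _ [::]) => [H0 [HV HE]]; apply/(@cwP _ _ _ [::]); rewrite size_mkseq.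
split => //; split => i Hi; rewrite !nth_mkseq ?ltn_pmod //.
  exact: (L1 (HV _ Hi) (HV _ (ltn_pmod _ H0)) (HE _ Hi)).
exact: (L2 (HV _ Hi) (HV _ (ltn_pmod _ H0)) (HE _ Hi) (HE _ (ltn_pmod _ H0))).
Qed.

Lemma T2 p : cw CKV CKE p -> cw sKV sKE (map behead p).
Proof.
move/(@cwP _ _ _ [::]) => [H0 [HV HE]]; apply/(@cwP _ _ _ [::]); rewrite size_map.
split => //; split => i Hi; rewrite !(nth_map [::]) ?ltn_pmod //.
  by apply: L3; apply: HV.
by apply: L4; [apply: HV | apply: HE].
Qed.

Lemma modS k i : (i %% k).+1 %% k = i.+1 %% k.
Proof. by rewrite -addn1 modnDml addn1. Qed.

Lemma lower p : cw sKV sKE p -> ~~ (size p %| l).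
Proof.
move/(@cwP _ _ _ [::]) => [H0 [HV HE]]; set k := size p in H0 HV HE *.
pose w n := nth0 (nth [::] p (n %% k)) 0.
have Hsz : forall i, size (nth [::] p (i %% k)) = l.
  by move=> i; case/sKvP: (HV _ (ltn_pmod i H0)).
have key : forall j i, j < l -> nth0 (nth [::] p (i %% k)) j = w (i + j).
  elim=> [|j IH] i Hj; first by rewrite addn0.
  have /sKaP[z [_ _ Ey]] := HE _ (ltn_pmod i H0).
  rewrite modS in Ey; have [Y1 _] := arc_nth (Hsz i) Ey.
  by rewrite -Y1 // IH ?addSnnS //; lia.
have arcz : forall i, w (i + l) != w i.
  move=> i; have /sKaP[z [Z1 _ Ey]] := HE _ (ltn_pmod i H0).
  rewrite modS in Ey; have [_ Y2] := arc_nth (Hsz i) Ey.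
  move: Z1; rewrite -Y2 key; last by lia.
  have -> : i.+1 + l.-1 = i + l by lia.
  by rewrite (key 0 i) ?addn0 //; lia.
apply/negP => Hd; move: (arcz 0); rewrite add0n /w.
by move: Hd; rewrite /dvdn => /eqP ->; rewrite mod0n eqxx.
Qed.

Lemma walk (w : nat -> 'I_d.+1) k : 0 < k -> (forall n, w (n + k) = w n) ->
  (forall n, w n.+1 != w n) -> (forall n, w (n + l) != w n) ->
  cw sKV sKE (mkseq (fun i => mkseq (fun j => w (i + j)) l) k).
Proof.
move=> H0 Hper HS Hl.
have Hper' : forall a n, w (n + a * k) = w n.
  elim=> [|a IH] n; first by rewrite mul0n addn0.
  have -> : n + a.+1 * k = (n + a * k) + k by rewrite mulSn; lia.
  by rewrite Hper IH.
have wmod : forall n, w n = w (n %% k).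
  by move=> n; rewrite {1}(divn_eq n k) addnC Hper'.
apply/(@cwP _ _ _ [::]); rewrite size_mkseq; split => //; split => i Hi.
  rewrite nth_mkseq //; apply/sKvP; rewrite size_mkseq; split => // j Hj.
  rewrite !nth_mkseq //; try lia.
  rewrite addnS eq_sym; exact: HS.
rewrite !nth_mkseq ?ltn_pmod //; apply/sKaP; exists (w (i + l)); split.
- by rewrite nth_mkseq ?addn0 //; lia.
- rewrite nth_mkseq; last by lia.
  have -> : i + l = (i + l.-1).+1 by lia.
  exact: HS.
apply: (@eq_from_nth _ ord0).
  by rewrite size_rcons size_behead !size_mkseq; lia.
rewrite size_mkseq => t Ht; rewrite nth_mkseq // nth_rcons size_behead size_mkseq.
rewrite wmod modnDml -wmod.
case: ltnP => Ht'.
  by rewrite nth_behead nth_mkseq ?addSnnS //; lia.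
have -> : t = l.-1 by lia.
by rewrite eqxx; congr w; lia.
Qed.

Definition cval (m : nat) : nat := if m == l then 2 else odd m.

Lemma exists_walk : exists p, cw sKV sKE p.
Proof.
pose w (n : nat) : 'I_d.+1 := inord (cval (n %% l.+1)).
have Hc : forall m, cval m < d.+1 by move=> m; rewrite /cval; case: (_ == _); lia.
have Hper : forall n, w (n + l.+1) = w n by move=> n; rewrite /w modnDr.
have HS : forall n, w n.+1 != w n.
  move=> n; rewrite /w; apply/negP => /eqP /(congr1 (@nat_of_ord _)); rewrite !inordK //.
  have Hm : n %% l.+1 < l.+1 by rewrite ltn_pmod.
  rewrite -addn1 -modnDml; move: Hm; move: (n %% l.+1) => m Hm.
  rewrite /cval; case: (eqVneq m l) => [->|Hml].
    rewrite addn1 modnn; case: eqP => [H|_] //; lia.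
  rewrite modn_small; last by lia.
  rewrite addn1; case: eqP => _; first by case: (odd m).
  by rewrite /=; case: (odd m).
exists (mkseq (fun i => mkseq (fun j => w (i + j)) l) l.+1).
apply: walk => // n; rewrite eq_sym -{1}(Hper n) addnS; exact: HS.
Qed.

End S.

Theorem mainTheorem11 (d l : nat) (hd : 2 <= d) (hl : 2 <= l) :
  exists g : nat,
    [/\ is_girth (sK_vertex d l) (sK_arc d l) g,
        is_girth (CK_vertex d l.+1) (CK_arc d l.+1) g
      & min_nondiv l <= g].
Proof.
have [p0 Hp0] := exists_walk hd hl.
have [g [[p [Hp Hs]] Hmin]] :=
  @min_ex (fun n => exists p, cw (@sKV d l) (@sKE d l) p /\ size p = n)
          (ex_intro _ (size p0) (ex_intro _ p0 (conj Hp0 erefl))).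
exists g; split.
- apply: girth_min; first by exists p.
  by move=> q Hq; apply: Hmin; exists q.
- apply: girth_min.
    exists (mkseq (fun i => nth ord0 (nth [::] p i) 0 :: nth [::] p (i.+1 %% size p)) (size p)).
    by split; [exact: (T1 hd hl Hp) | rewrite size_mkseq].
  move=> q Hq; rewrite -(size_map behead); apply: Hmin; exists (map behead q).
  by split => //; exact: (T2 hd hl Hq).
- rewrite /min_nondiv; case: ex_minnP => m _ Hm; rewrite -Hs; apply: Hm.
  have := lower hd hl Hp; rewrite prednK; last by lia.
  move=> ->; case/and3P: Hp => -> _ _ //.
Qed.
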